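(* Let $n\geq 3$ and let $f(\overleftrightarrow{K}_{n})$ be the smallest integer such that every arc-colored complete digraph $\overleftrightarrow{K}_{n}$ with $c(\overleftrightarrow{K}_{n})\geq f(\overleftrightarrow{K}_{n})$ contains a rainbow triangle. Then \[f(\overleftrightarrow{K}_{n})=\begin{cases} \lfloor\frac{n^{2}}{4}\rfloor+3,&\text{if } n=3, 4;\\ \lfloor\frac{n^{2}}{4}\rfloor+2,&\text{if } n\geq 5. \end{cases}\]
   Context: All digraphs are finite, without loops or multiple arcs (a pair of opposite arcs $xy,yx$ is allowed). The complete digraph $\overleftrightarrow{K}_{n}$ is obtained from $K_n$ by replacing each edge $xy$ by the two arcs $xy$ and $yx$. An arc-coloring of a digraph $D$ is any map $C:A(D)\to\mathbb{N}$; $c(D)$ denotes the number of distinct colors used on the arcs of $D$. A rainbow triangle is a directed triangle (directed cycle of length 3) whose three arcs have pairwise distinct colors. *)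

(* Defs.v *)
From mathcomp Require Import all_boot.
Set Implicit Arguments. Unset Strict Implicit. Unset Printing Implicit Defensive.

(* The complete digraph K_n <-> has vertex set 'I_n and arc set
   {(x,y) | x != y}.  An arc-colouring is any map assigning a natural number
   to each arc; we represent it as C : 'I_n -> 'I_n -> nat, whose values on
   the (non-arc) diagonal pairs (x,x) are ignored. *)
Definition arc_coloring (n : nat) := 'I_n -> 'I_n -> nat.

Definition num_colors (n : nat) (C : arc_coloring n) : nat :=
  size (undup [seq C p.1 p.2 | p <- enum [pred p : 'I_n * 'I_n | p.1 != p.2]]).

Definition has_rainbow_triangle (n : nat) (C : arc_coloring n) : Prop :=
  exists x y z : 'I_n,
    [/\ x != y, y != z, z != x &
        [/\ C x y != C y z, C y z != C z x & C z x != C x y]].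

Definition forces_rainbow (n k : nat) : Prop :=
  forall C : arc_coloring n, k <= num_colors C -> has_rainbow_triangle C.

Definition is_f_Kn (n k : nat) : Prop :=
  forces_rainbow n k /\ forall j : nat, forces_rainbow n j -> k <= j.

(* Main.v *)
Require Import Defs.
From mathcomp Require Import all_boot zify.
Set Implicit Arguments. Unset Strict Implicit. Unset Printing Implicit Defensive.

Definition arcs_of (vs : seq nat) : seq (nat * nat) :=
  flatten [seq flatten [seq [:: (nth 0 vs i, nth 0 vs k); (nth 0 vs k, nth 0 vs i)] | i <- iota 0 k]
          | k <- iota 0 (size vs)].
Definition arcs_nat (n : nat) : seq (nat * nat) := arcs_of (iota 0 n).
Definition alltri (L : seq (nat * nat)) (n : nat) : seq (nat * nat * nat) :=
  [seq (index (p.1.1,p.1.2) L, index (p.1.2,p.2) L, index (p.2,p.1.1) L) |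
     p <- [seq p <- [seq (xy, z) | xy <- [seq (x, y) | x <- iota 0 n, y <- iota 0 n], z <- iota 0 n]
          | [&& p.1.1 < p.1.2, p.1.1 < p.2 & p.1.2 != p.2]]].
Definition maxt (t : nat * nat * nat) := maxn (maxn t.1.1 t.1.2) t.2.
Definition table (L : seq (nat * nat)) (n : nat) : seq (seq (nat*nat*nat)) :=
  let T := alltri L n in [seq [seq t <- T | maxt t == k] | k <- iota 0 (size L)].
Definition table2 (L : seq (nat * nat)) (n : nat) : seq (seq (nat*nat*nat)) :=
  [seq [seq (k - t.1.1, k - t.1.2, k - t.2) | t <- nth [::] (table L n) k] | k <- iota 0 (size L)].
Definition rainbow (s : seq nat) (t : nat * nat * nat) :=
  let a := nth 0 s t.1.1 in let b := nth 0 s t.1.2 in let c := nth 0 s t.2 in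
  [&& a != b, b != c & c != a].
Fixpoint search (tbl : seq (seq (nat*nat*nat))) (target lr need r : nat) (pre : seq nat) (m : nat) : bool :=
  match r, tbl with
  | 0, _ => target <= m
  | r'.+1, tk :: tbl' => if (target <= m + r) && ((r != lr) || (need <= m)) then
      has (fun c => let pre' := c :: pre in
             if all (fun t => ~~ rainbow pre' t) tk then
             search tbl' target lr need r' pre' (if c == m then m.+1 else m) else false) (iota 0 m.+1)
      else false
  | _, _ => false
  end.

Fixpoint rg m s := match s with [::] => true | x :: t => (x <= m) && rg (if x == m then m.+1 else m) t end.
Fixpoint mf m s := match s with [::] => m | x :: t => mf (if x == m then m.+1 else m) t end.

Lemma mf_le m s : mf m s <= m + size s.
Proof.
elim: s m => [|x s IH] m /=; first by rewrite addn0.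
apply: leq_trans (IH _) _; case: eqP => _; by rewrite ?addSnnS ?leq_add2l ?addnS.
Qed.

Lemma search_cons tk tbl target lr need r pre m : search (tk::tbl) target lr need r.+1 pre m =
  if (target <= m + r.+1) && ((r.+1 != lr) || (need <= m)) then
      has (fun c => let pre' := c :: pre in
             if all (fun t => ~~ rainbow pre' t) tk then
             search tbl target lr need r pre' (if c == m then m.+1 else m) else false) (iota 0 m.+1)
      else false.
Proof. by []. Qed.

Lemma search_true tbl target lr need s : forall pre m, size tbl = size s -> rg m s -> target <= mf m s ->
  (lr <= size s -> need <= mf m (take (size s - lr) s)) ->
  (forall i, i < size s -> all (fun t => ~~ rainbow (rev (take i.+1 s) ++ pre) t) (nth [::] tbl i)) ->
  search tbl target lr need (size s) pre m.
Proof.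
elim: s tbl => [|x s IH] [|tk tbl] pre m //.
move=> [Hs] /andP[Hx Hrg] Ht Hneed Hall.
change (size (x :: s)) with (size s).+1.
rewrite search_cons.
case: ifP => [_|/negP[]]; last first.
  rewrite (leq_trans Ht (mf_le m (x :: s))) /=.
  case: eqP => // Hl; move: Hneed; rewrite /= Hl subnn take0 /=; by apply.
apply/hasP; exists x; first by rewrite mem_iota.
have H0 := Hall 0 (ltn0Sn _); move: H0; rewrite /= take0 => H0.
case: ifP => [_|/negP[]]; last exact: H0.
apply: IH => //.
  move=> Hl; have Hl' : lr <= (size s).+1 by apply: leq_trans Hl _.
  move: (Hneed Hl'); rewrite /= subSn //.
move=> i Hi.
have := Hall i.+1 Hi; by rewrite /= rev_cons cat_rcons.
Qed.

Fixpoint fin (seen cs : seq nat) := match cs with [::] => seen | x :: t => fin (if x \in seen then seen else rcons seen x) t end.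

Lemma fin_prefix cs : forall seen, exists e, fin seen cs = seen ++ e.
Proof.
elim: cs => [|x cs IH] seen /=; first by exists [::]; rewrite cats0.
case: (IH (if x \in seen then seen else rcons seen x)) => e ->.
case: ifP => _; first by exists e.
by exists (x :: e); rewrite cat_rcons.
Qed.

Lemma fin_uniq cs : forall seen, uniq seen -> uniq (fin seen cs).
Proof.
elim: cs => [|x cs IH] seen //= Hu; apply: IH; case: ifP => // Hx.
by rewrite rcons_uniq Hx Hu.
Qed.

Lemma mem_fin cs : forall seen x, (x \in fin seen cs) = (x \in seen) || (x \in cs).
Proof.
elim: cs => [|y cs IH] seen x /=; first by rewrite orbF.
rewrite IH in_cons; case: ifP => Hy.
  by case: (eqVneq x y) => [->|]; rewrite ?Hy.
by rewrite mem_rcons in_cons orbA (orbC (x == y)).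
Qed.

Lemma canon_rg cs : forall seen,
  rg (size seen) [seq index x (fin seen cs) | x <- cs] /\
  mf (size seen) [seq index x (fin seen cs) | x <- cs] = size (fin seen cs).
Proof.
elim: cs => [|x cs IH] seen //=.
set seen' := if x \in seen then seen else rcons seen x.
have [e He] := fin_prefix cs seen'.
have Hx' : x \in seen' by rewrite /seen'; case: ifP => // _; rewrite mem_rcons mem_head.
rewrite He index_cat Hx' -He.
case: (IH seen') => IH1 IH2.
rewrite /seen' in Hx' IH1 IH2 *.
have [Hx|Hx] := boolP (x \in seen).
- rewrite Hx in IH1 IH2 *.
  have Hlt : index x seen < size seen by rewrite index_mem.
  by rewrite (ltnW Hlt) (ltn_eqF Hlt) IH1 IH2.
- rewrite (negbTE Hx) in IH1 IH2 *.
  have Hi : index x (rcons seen x) = size seen.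
    by rewrite -cats1 index_cat (negbTE Hx) /= eqxx addn0.
  by rewrite Hi leqnn eqxx -[(size seen).+1](size_rcons seen x) IH1 IH2.
Qed.

Definition tri_nat n (p q r : nat * nat) :=
  [&& p.2 == q.1, q.2 == r.1, r.2 == p.1, p.1 != p.2, q.1 != q.2, r.1 != r.2,
      p.1 < n, q.1 < n & r.1 < n].
Definition check_tbl n (L : seq (nat * nat)) (tbl : seq (seq (nat*nat*nat))) :=
  (size tbl == size L) &&
  all (fun i => all (fun t => [&& t.1.1 <= i, t.1.2 <= i, t.2 <= i &
        tri_nat n (nth (0,0) L (i - t.1.1)) (nth (0,0) L (i - t.1.2)) (nth (0,0) L (i - t.2))])
      (nth [::] tbl i)) (iota 0 (size L)).
Definition covers n (L : seq (nat * nat)) :=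
  all (fun x => all (fun y => (x != y) ==> ((x, y) \in L)) (iota 0 n)) (iota 0 n).
Definition cs_of n (C : arc_coloring n.+1) (L : seq (nat * nat)) :=
  [seq C (inord p.1) (inord p.2) | p <- L].

Lemma fin_cat a b : forall seen, fin seen (a ++ b) = fin (fin seen a) b.
Proof. by elim: a => [|x a IH] seen //=. Qed.

Lemma mf_take (cs : seq nat) k :
  mf 0 (take k [seq index x (fin [::] cs) | x <- cs]) = size (fin [::] (take k cs)).
Proof.
rewrite -map_take.
have E : fin [::] cs = fin (fin [::] (take k cs)) (drop k cs) by rewrite -fin_cat cat_take_drop.
have [e He] := fin_prefix (drop k cs) (fin [::] (take k cs)).
have -> : [seq index x (fin [::] cs) | x <- take k cs] =
          [seq index x (fin [::] (take k cs)) | x <- take k cs].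
  by apply/eq_in_map => x Hx; rewrite E He index_cat mem_fin Hx orbT.
by case: (canon_rg (take k cs) [::]).
Qed.

Lemma index_inj (F : seq nat) u v : u \in F -> v \in F -> (index u F == index v F) = (u == v).
Proof.
move=> Hu Hv; apply/eqP/eqP => [H|->] //.
by rewrite -(nth_index 0 Hu) H nth_index.
Qed.

Lemma nth_revtake (S : seq nat) i o : o <= i -> i < size S ->
  nth 0 (rev (take i.+1 S) ++ [::]) o = nth 0 S (i - o).
Proof.
move=> Ho Hi; rewrite cats0 nth_rev; last by rewrite size_takel.
rewrite size_takel // nth_take; last by rewrite subSS ltnS leq_subr.
by rewrite subSS.
Qed.

Lemma comp_bound n (C : arc_coloring n.+1) target L tbl lr need :
  check_tbl n.+1 L tbl -> covers n.+1 L ->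
  search tbl target lr need (size L) [::] 0 = false ->
  need <= size (fin [::] (take (size L - lr) (cs_of C L))) ->
  ~ has_rainbow_triangle C -> num_colors C < target.
Proof.
move=> Hchk Hcov Hsearch Hneed Hnr.
set cs := cs_of C L.
set F := fin [::] cs.
set S := [seq index x F | x <- cs].
rewrite ltnNge; apply/negP => Ht.
have [Hrg Hmf] := canon_rg cs [::].
have Hnum : num_colors C <= size F.
  rewrite /num_colors; apply: uniq_leq_size (undup_uniq _) _ => c.
  rewrite mem_undup => /mapP [[x y]]; rewrite mem_enum inE /= => Hxy ->.
  rewrite mem_fin /=; apply/mapP; exists (val x, val y); last by rewrite /= !inord_val.
  move/allP: Hcov => /(_ (val x)); rewrite mem_iota ltn_ord => /(_ isT) /allP /(_ (val y)).
  by rewrite mem_iota ltn_ord => /(_ isT); rewrite Hxy.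
have HcsF : forall a, a < size cs -> nth 0 cs a \in F.
  by move=> a Ha; rewrite mem_fin mem_nth ?orbT.
have HS : forall a b, a < size cs -> b < size cs ->
    (nth 0 S a == nth 0 S b) = (nth 0 cs a == nth 0 cs b).
  by move=> a b Ha Hb; rewrite !(nth_map 0) // index_inj // HcsF.
have Hcs : forall a, a < size L -> nth 0 cs a = C (inord (nth (0,0) L a).1) (inord (nth (0,0) L a).2).
  by move=> a Ha; rewrite (nth_map (0,0)).
move/andP: Hchk => [/eqP Hsz Hall].
have HsS : size S = size L by rewrite !size_map.
have : search tbl target lr need (size S) [::] 0.
  apply: search_true => //; first by rewrite HsS.
    by apply: leq_trans Ht (leq_trans Hnum _); rewrite Hmf.
    by move=> _; rewrite /S /F mf_take HsS.
  move=> i Hi; apply/allP => t Ht'.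
  move/allP: Hall => /(_ i); rewrite mem_iota /= -HsS => /(_ Hi) /allP /(_ t Ht').
  case: t Ht' => [[o1 o2] o3] _ /=.
  move=> /and4P [H1 H2 H3 Htri].
  have Hisz : i < size cs by rewrite size_map -HsS.
  have Hlt : forall o, o <= i -> i - o < size cs.
    by move=> o _; apply: leq_ltn_trans (leq_subr _ _) Hisz.
  rewrite /rainbow /= !nth_revtake // !HS ?Hlt //.
  have Hl : forall o, o <= i -> i - o < size L by move=> o Ho; rewrite -(size_map (fun p => C (inord p.1) (inord p.2))) Hlt.
  rewrite !Hcs ?Hl //.
  move: Htri; rewrite /tri_nat.
  case: (nth (0,0) L (i - o1)) => x y; case: (nth (0,0) L (i - o2)) => y' z;
  case: (nth (0,0) L (i - o3)) => z' x' /=.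
  move=> /and5P [/eqP <- /eqP <- /eqP -> Hxy /and5P [Hyz Hzx Hx Hy Hz]].
  apply/negP => Hrb; apply: Hnr; exists (inord x), (inord y), (inord z).
  have Hne : forall a b, a < n.+1 -> b < n.+1 -> a != b -> (inord a : 'I_n.+1) != inord b.
    by move=> a b Ha Hb Hab; apply/eqP => /(congr1 (@nat_of_ord _)); rewrite !inordK //; apply/eqP.
  move/and3P: Hrb => [Ha Hb Hc].
  by split; rewrite ?Hne // eq_sym.
by rewrite HsS Hsearch.
Qed.

Definition norb N (C : arc_coloring N) := forall x y z : 'I_N, x != y -> y != z -> z != x ->
  [|| C x y == C y z, C y z == C z x | C z x == C x y].

Lemma norbP N (C : arc_coloring N) : ~ has_rainbow_triangle C -> norb C.
Proof.
move=> H x y z Hxy Hyz Hzx; apply/negPn/negP; rewrite !negb_or => /and3P[H1 H2 H3].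
by apply: H; exists x, y, z.
Qed.

Definition isnew N (C : arc_coloring N) v c :=
  [forall p : 'I_N * 'I_N, ((p.1 != p.2) && (C p.1 p.2 == c)) ==> ((p.1 == v) || (p.2 == v))].

Lemma far N (C : arc_coloring N) v c x y : isnew C v c -> x != v -> y != v -> x != y -> C x y != c.
Proof.
move=> /forallP /(_ (x, y)) /= H Hx Hy Hxy; apply/negP => Hc.
by move: H; rewrite Hxy Hc /= (negbTE Hx) (negbTE Hy).
Qed.

Definition Out N (C : arc_coloring N) v := [set u | (u != v) && isnew C v (C v u)].
Definition In N (C : arc_coloring N) v := [set u | (u != v) && isnew C v (C u v)].
Definition newl N (C : arc_coloring N) v :=
  [seq C p.1 p.2 | p <- enum [pred p : 'I_N * 'I_N | [&& p.1 != p.2, (p.1 == v) || (p.2 == v) & isnew C v (C p.1 p.2)]]].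
Definition newc N (C : arc_coloring N) v := size (undup (newl C v)).

Lemma newl_mem N (C : arc_coloring N) v c : c \in newl C v ->
  (exists2 u, u \in Out C v & c = C v u) \/ (exists2 w, w \in In C v & c = C w v).
Proof.
case/mapP => [[x y]]; rewrite mem_enum inE /= => /and3P [Hxy /orP [/eqP Ex|/eqP Ey] Hn] ->.
- by subst x; left; exists y => //; rewrite inE Hn eq_sym Hxy.
- by subst y; right; exists x => //; rewrite inE Hn Hxy.
Qed.

Lemma two_bound (l : seq nat) a b : {subset l <= [:: a; b]} -> size (undup l) <= 2.
Proof.
move=> Hs; apply: (uniq_leq_size (s2 := [:: a; b])) (undup_uniq _) _ => x.
by rewrite mem_undup => /Hs.
Qed.

Lemma claimA N (C : arc_coloring N) v u w : norb C -> u \in Out C v -> w \in In C v -> u != w ->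
  C v u = C w v.
Proof.
move=> H; rewrite !inE => /andP[Huv Hu] /andP[Hwv Hw] Huw.
have := H v u w; rewrite eq_sym Huv Huw Hwv => /(_ isT isT isT) /or3P [] /eqP E.
- by move: (far Hu Huv Hwv Huw); rewrite E eqxx.
- by move: (far Hw Huv Hwv Huw); rewrite E eqxx.
- by [].
Qed.

Lemma claimBcore N (C : arc_coloring N) v u0 w0 : norb C -> u0 \in Out C v -> w0 \in In C v -> u0 != w0 ->
  newc C v <= 2.
Proof.
move=> H Hu0 Hw0 Huw0.
apply: (two_bound (a := C w0 v) (b := if w0 \in Out C v then C v w0 else C u0 v)) => c.
case/newl_mem => [[u Hu ->]|[w Hw ->]].
- case: (eqVneq u w0) => [Ew|Hne].
    by rewrite -Ew Hu !inE eqxx orbT.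
  by rewrite (claimA H Hu Hw0 Hne) inE eqxx.
- case: (eqVneq w u0) => [Ew|Hne].
    rewrite Ew in Hw *; case: ifP => Hw0o; last by rewrite !inE eqxx orbT.
    have Hne : w0 != u0 by rewrite eq_sym.
    by rewrite -(claimA H Hw0o Hw Hne) !inE eqxx orbT.
  have Hne' : u0 != w by rewrite eq_sym.
  by rewrite -(claimA H Hu0 Hw Hne') (claimA H Hu0 Hw0 Huw0) inE eqxx.
Qed.

Lemma claimB N (C : arc_coloring N) v u0 w0 : norb C -> u0 \in Out C v -> w0 \in In C v ->
  newc C v <= 2.
Proof.
move=> H Hu0 Hw0.
case: (eqVneq u0 w0) => [E|Hne]; last exact: claimBcore H Hu0 Hw0 Hne.
subst w0.
case: (pickP (fun u => (u \in Out C v) && (u != u0))) => [u /andP[Hu Hne]|Hno1].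
  exact: claimBcore H Hu Hw0 Hne.
case: (pickP (fun w => (w \in In C v) && (w != u0))) => [w /andP[Hw Hne]|Hno2].
  by apply: claimBcore H Hu0 Hw _; rewrite eq_sym.
apply: (two_bound (a := C v u0) (b := C u0 v)) => c.
case/newl_mem => [[u Hu ->]|[w Hw ->]].
- have := Hno1 u; rewrite /= Hu /= => /negbFE /eqP ->.
  by rewrite inE eqxx.
- have := Hno2 w; rewrite /= Hw /= => /negbFE /eqP ->.
  by rewrite !inE eqxx orbT.
Qed.

Lemma claimC N (C : arc_coloring N) v : In C v = set0 -> newc C v <= #|Out C v|.
Proof.
move=> HI; rewrite cardE -(size_map (fun u => C v u)).
apply: uniq_leq_size (undup_uniq _) _ => c; rewrite mem_undup.
case/newl_mem => [[u Hu ->]|[w Hw _]]; first by apply: map_f; rewrite mem_enum.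
by rewrite HI inE in Hw.
Qed.

Lemma claimC' N (C : arc_coloring N) v : Out C v = set0 -> newc C v <= #|In C v|.
Proof.
move=> HO; rewrite cardE -(size_map (fun w => C w v)).
apply: uniq_leq_size (undup_uniq _) _ => c; rewrite mem_undup.
case/newl_mem => [[u Hu _]|[w Hw ->]]; last by apply: map_f; rewrite mem_enum.
by rewrite HO inE in Hu.
Qed.

Lemma claimD N (C : arc_coloring N) v u w : norb C -> In C v = set0 -> u \in Out C v ->
  w != v -> u != w -> C u w = C w v.
Proof.
move=> H HI Hu Hwv Huw; move: (Hu); rewrite inE => /andP[Huv Hn].
have := H v u w; rewrite eq_sym Huv Huw Hwv => /(_ isT isT isT) /or3P [] /eqP E.
- by move: (far Hn Huv Hwv Huw); rewrite E eqxx.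
- by [].
- have : w \in In C v by rewrite inE Hwv E.
  by rewrite HI inE.
Qed.

Lemma claimD' N (C : arc_coloring N) v u w : norb C -> Out C v = set0 -> w \in In C v ->
  u != v -> u != w -> C v u = C u w.
Proof.
move=> H HO Hw Huv Huw; move: (Hw); rewrite inE => /andP[Hwv Hn].
have := H v u w; rewrite eq_sym Huv Huw Hwv => /(_ isT isT isT) /or3P [] /eqP E.
- by [].
- by move: (far Hn Huv Hwv Huw); rewrite E eqxx.
- have : u \in Out C v by rewrite inE Huv -E.
  by rewrite HO inE.
Qed.

Lemma claimE N (C : arc_coloring N) v w x : norb C -> In C v = set0 -> In C w = set0 ->
  x \in Out C w -> x != v -> w \notin Out C v.
Proof.
move=> H HIv HIw Hx Hxv; apply/negP => Hw.
move: (Hw); rewrite inE => /andP[Hwv Hn].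
have Hvw : v != w by rewrite eq_sym.
have E := claimD H HIw Hx Hvw Hxv.
have : x \in In C v by rewrite inE Hxv E.
by rewrite HIv inE.
Qed.

Lemma claimE' N (C : arc_coloring N) v w x : norb C -> Out C v = set0 -> Out C w = set0 ->
  x \in In C w -> x != v -> w \notin In C v.
Proof.
move=> H HOv HOw Hx Hxv; apply/negP => Hw.
move: (Hw); rewrite inE => /andP[Hwv Hn].
have Hvw : v != w by rewrite eq_sym.
have Hvx : v != x by rewrite eq_sym.
have E := claimD' H HOw Hx Hvw Hvx.
have : x \in Out C v by rewrite inE Hxv -E.
by rewrite HOv inE.
Qed.

Lemma key N (C : arc_coloring N) : 4 <= N -> norb C -> exists v, newc C v <= N./2.
Proof.
move=> HN H.
case: (pickP (fun v => newc C v <= N./2)) => [v Hv|Hall]; first by exists v.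
exfalso.
have H2 : 2 <= N./2 by have := half_leq HN.
have Hbig : forall v, 3 <= newc C v.
  by move=> v; have := Hall v; rewrite /= => /negbT; rewrite -ltnNge; lia.
have Hone : forall v, In C v = set0 \/ Out C v = set0.
  move=> v; case: (set_0Vmem (In C v)) => [->|[w Hw]]; [by left|].
  case: (set_0Vmem (Out C v)) => [->|[u Hu]]; [by right|].
  by have := claimB H Hu Hw; have := Hbig v; lia.
set O := [set v | In C v == set0].
have HO1 : forall v, v \in O -> newc C v <= #|~: O|.
  move=> v; rewrite inE => /eqP HIv.
  apply: leq_trans (claimC HIv) _; apply: subset_leq_card; apply/subsetP => w Hw.
  rewrite !inE; apply/negP => /eqP HIw.
  have Hcw : 3 <= #|Out C w| := leq_trans (Hbig w) (claimC HIw).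
  have : 0 < #|Out C w :\ v|.
    by move: Hcw; rewrite (cardsD1 v); case: (v \in Out C w) => /=; lia.
  case/card_gt0P => x; rewrite in_setD1 => /andP[Hxv Hx].
  by move: Hw; rewrite (negbTE (claimE H HIv HIw Hx Hxv)).
have HO2 : forall v, v \notin O -> newc C v <= #|O|.
  move=> v; rewrite inE => HIv.
  have HOv : Out C v = set0 by case: (Hone v) => // /eqP; rewrite (negbTE HIv).
  apply: leq_trans (claimC' HOv) _; apply: subset_leq_card; apply/subsetP => w Hw.
  rewrite inE; apply/negPn/negP => HIw.
  have HOw : Out C w = set0 by case: (Hone w) => // /eqP; rewrite (negbTE HIw).
  have Hcw : 3 <= #|In C w| := leq_trans (Hbig w) (claimC' HOw).
  have : 0 < #|In C w :\ v|.
    by move: Hcw; rewrite (cardsD1 v); case: (v \in In C w) => /=; lia.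
  case/card_gt0P => x; rewrite in_setD1 => /andP[Hxv Hx].
  by move: Hw; rewrite (negbTE (claimE' H HOv HOw Hx Hxv)).
have Hcard : #|O| + #|~: O| = N by rewrite cardsC card_ord.
case: (leqP #|O| N./2) => HOs.
- case: (set_0Vmem (~: O)) => [HC|[v Hv]].
  + have v0 : 'I_N := Ordinal (leq_trans (isT : 0 < 4) HN).
    have : v0 \notin ~: O by rewrite HC inE.
    rewrite inE negbK => Hv0.
    by have := HO1 v0 Hv0; rewrite HC cards0; have := Hbig v0; lia.
  + rewrite inE in Hv; have := Hall v.
    by rewrite /= (leq_trans (HO2 v Hv) HOs).
- have : 0 < #|O| by lia.
  case/card_gt0P => v Hv.
  have Hodd := odd_double_half N; rewrite -addnn in Hodd.
  have Hb : odd N <= 1 by case: (odd N).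
  have := Hall v; rewrite /= (leq_trans (HO1 v Hv)) //; lia.
Qed.

Definition del n (C : arc_coloring n.+1) (v : 'I_n.+1) : arc_coloring n :=
  fun i j => C (lift v i) (lift v j).

Lemma del_norb n (C : arc_coloring n.+1) v : norb C -> norb (del C v).
Proof.
move=> H x y z Hxy Hyz Hzx; apply: H; by rewrite (inj_eq (@lift_inj _ v)).
Qed.

Lemma undup_cat_le (s a b : seq nat) : {subset s <= a ++ b} ->
  size (undup s) <= size (undup a) + size (undup b).
Proof.
move=> Hs; rewrite -size_cat; apply: uniq_leq_size (undup_uniq _) _ => x.
by rewrite mem_undup mem_cat !mem_undup -mem_cat => /Hs.
Qed.

Lemma del_count n (C : arc_coloring n.+1) v : num_colors C <= num_colors (del C v) + newc C v.
Proof.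
rewrite /num_colors /newc; apply: undup_cat_le => c /mapP [[x y]].
rewrite mem_enum inE /= => Hxy ->.
rewrite mem_cat.
have Hfar : forall x' y', x' != y' -> x' != v -> y' != v ->
    C x' y' \in [seq del C v p.1 p.2 | p <- enum [pred p : 'I_n * 'I_n | p.1 != p.2]].
  move=> x' y' Hne Hx Hy.
  case: (unliftP v x') Hx Hne => [a ->|->]; last by rewrite eqxx.
  case: (unliftP v y') Hy => [b ->|->]; last by rewrite eqxx.
  move=> _ _ Hab; apply/mapP; exists (a, b) => //.
  by rewrite mem_enum inE /= -(inj_eq (@lift_inj _ v)).
case: (boolP ((x == v) || (y == v))) => Hv.
- case: (boolP (isnew C v (C x y))) => Hn.
    by apply/orP; right; apply/mapP; exists (x, y); rewrite // mem_enum inE /= Hxy Hv Hn.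
  move: Hn; rewrite negb_forall => /existsP [[x' y']] /=.
  rewrite negb_imply negb_or => /andP [/andP [Hne /eqP <-] /andP [Hx Hy]].
  by apply/orP; left; exact: Hfar.
- by rewrite negb_or in Hv; case/andP: Hv => Hx Hy; rewrite Hfar.
Qed.

Lemma s3 : search (table2 (arcs_nat 3) 3) 5 0 0 (size (arcs_nat 3)) [::] 0 = false.
Proof. vm_cast_no_check (erefl false). Qed.
Lemma s4 : search (table2 (arcs_nat 4) 4) 7 0 0 (size (arcs_nat 4)) [::] 0 = false.
Proof. vm_cast_no_check (erefl false). Qed.
Lemma k3 : check_tbl 3 (arcs_nat 3) (table2 (arcs_nat 3) 3). Proof. by vm_compute. Qed.
Lemma k4 : check_tbl 4 (arcs_nat 4) (table2 (arcs_nat 4) 4). Proof. by vm_compute. Qed.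
Lemma v3 : covers 3 (arcs_nat 3). Proof. by vm_compute. Qed.
Lemma v4 : covers 4 (arcs_nat 4). Proof. by vm_compute. Qed.

Definition vorder (v : nat) := rcons [seq x <- iota 0 5 | x != v] v.
Definition L5 (v : nat) := arcs_of (vorder v).
Definition first12 (v : nat) (L : seq (nat * nat)) :=
  all (fun x => all (fun y => [&& x != y, x != v & y != v] ==> ((x, y) \in take 12 L)) (iota 0 5)) (iota 0 5).
Definition ok5 (v : nat) := let L := L5 v in
  [&& check_tbl 5 L (table2 L 5), covers 5 L, size L == 20, first12 v L &
      ~~ search (table2 L 5) 8 8 6 20 [::] 0].
Lemma all5 : all ok5 (iota 0 5).
Proof. vm_cast_no_check (erefl true). Qed.

Lemma norb_nr N (C : arc_coloring N) : norb C -> ~ has_rainbow_triangle C.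
Proof.
move=> H [x [y [z [Hxy Hyz Hzx [H1 H2 H3]]]]].
by have := H x y z Hxy Hyz Hzx; rewrite (negbTE H1) (negbTE H2) (negbTE H3).
Qed.

Lemma rainbow_dec N (C : arc_coloring N) : has_rainbow_triangle C \/ norb C.
Proof.
case: (boolP [exists x, exists y, exists z, [&& x != y, y != z, z != x &
    ~~ [|| C x y == C y z, C y z == C z x | C z x == C x y]]]).
  case/existsP => x /existsP [y /existsP [z /and4P [Hxy Hyz Hzx]]].
  rewrite !negb_or => /and3P [H1 H2 H3]; left; by exists x, y, z.
move=> Hn; right => x y z Hxy Hyz Hzx; apply/negPn/negP => Hb; move/negP: Hn; apply.
by apply/existsP; exists x; apply/existsP; exists y; apply/existsP; exists z; rewrite Hxy Hyz Hzx Hb.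
Qed.

Lemma sq4 n : n * n %/ 4 + n.+1./2 = n.+1 * n.+1 %/ 4.
Proof.
have := odd_double_half n; rewrite -addnn.
have : odd n <= 1 by case: (odd n).
rewrite -uphalfE uphalf_half.
set k := n./2; set b := nat_of_bool (odd n).
move=> Hb Hn.
nia.
Qed.

Lemma ub5 (C : arc_coloring 5) : norb C -> num_colors C <= 7.
Proof.
move=> H.
have [v Hv] := key (isT : 4 <= 5) H.
rewrite leqNgt; apply/negP => H8.
have Hd : 6 <= num_colors (del C v) by have := del_count C v; move: Hv; rewrite /=; lia.
have Hok : ok5 v by move/allP: all5 => /(_ v); rewrite mem_iota ltn_ord; apply.
move: Hok; rewrite /ok5 => /and5P [Hc Hcov /eqP Hs H12 Hse].
have Hs1 : search (table2 (L5 v) 5) 8 8 6 (size (L5 v)) [::] 0 = false.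
  by rewrite Hs; exact: negbTE Hse.
suff Hneed : 6 <= size (fin [::] (take (size (L5 v) - 8) (cs_of C (L5 v)))).
  by have := comp_bound Hc Hcov Hs1 Hneed (norb_nr H); lia.
  rewrite Hs /=; apply: leq_trans Hd _.
  apply: uniq_leq_size (undup_uniq _) _ => c.
  rewrite mem_undup => /mapP [[i j]]; rewrite mem_enum inE /= => Hij ->.
  rewrite mem_fin /= /cs_of -map_take.
  apply/mapP; exists (val (lift v i), val (lift v j)); last first.
    change (del C v i j = C (inord (val (lift v i))) (inord (val (lift v j)))).
    by rewrite !inord_val.
  move/allP: H12 => /(_ (val (lift v i))); rewrite mem_iota ltn_ord => /(_ isT) /allP.
  move=> /(_ (val (lift v j))); rewrite mem_iota ltn_ord => /(_ isT) /implyP; apply.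
  have Hi := neq_lift v i; have Hj := neq_lift v j.
  rewrite (inj_eq val_inj) (inj_eq (@lift_inj _ v)) Hij /=.
  by apply/andP; split; rewrite eq_sym.
Qed.

Definition gbound n := if n <= 4 then n * n %/ 4 + 2 else n * n %/ 4 + 1.

Lemma ub n (C : arc_coloring n) : 3 <= n -> norb C -> num_colors C <= gbound n.
Proof.
elim: n C => [|n IH] C Hn H //.
case: (ltnP n 5) => Hn5.
  move: IH C Hn H Hn5; case: n => [|[|[|[|[|n]]]]] //= IH C Hn H Hn5.
  - by have := comp_bound (C := C) k3 v3 s3 (leq0n _) (norb_nr H).
  - by have := comp_bound (C := C) k4 v4 s4 (leq0n _) (norb_nr H).
  - exact: ub5 H.
have HN : 4 <= n.+1 by lia.
have Hn3 : 3 <= n by lia.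
have [v Hv] := key HN H.
have Hd := IH (del C v) Hn3 (del_norb v H).
apply: leq_trans (del_count C v) _.
move: Hd; rewrite /gbound.
have -> : (n <= 4) = false by lia.
have -> : (n.+1 <= 4) = false by lia.
rewrite -sq4 => Hd.
lia.
Qed.

Definition norbn n (c : nat -> nat -> nat) := all (fun x => all (fun y => all (fun z =>
   (x != y) ==> (y != z) ==> (z != x) ==> [|| c x y == c y z, c y z == c z x | c z x == c x y])
   (iota 0 n)) (iota 0 n)) (iota 0 n).
Lemma norbn_norb n c : norbn n c -> norb (fun x y : 'I_n => c x y).
Proof.
move=> H x y z Hxy Hyz Hzx.
move/allP: H => /(_ x); rewrite mem_iota ltn_ord => /(_ isT) /allP /(_ y).
rewrite mem_iota ltn_ord => /(_ isT) /allP /(_ z); rewrite mem_iota ltn_ord => /(_ isT).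
by move=> /implyP /(_ Hxy) /implyP /(_ Hyz) /implyP /(_ Hzx).
Qed.

Lemma arc_in n (C : arc_coloring n) (x y : 'I_n) : x != y ->
  C x y \in [seq C p.1 p.2 | p <- enum [pred p : 'I_n * 'I_n | p.1 != p.2]].
Proof. by move=> H; apply/mapP; exists (x, y) => //; rewrite mem_enum inE. Qed.

Lemma num_ge n (C : arc_coloring n) (l : seq nat) : uniq l ->
  {subset l <= [seq C p.1 p.2 | p <- enum [pred p : 'I_n * 'I_n | p.1 != p.2]]} ->
  size l <= num_colors C.
Proof. by move=> Hu Hs; apply: uniq_leq_size Hu _ => c /Hs; rewrite mem_undup. Qed.

Definition c3 x y := nth 0 (nth [::] [:: [:: 0;0;2]; [:: 3;0;0]; [:: 1;2;0]] x) y.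
Definition C3 : arc_coloring 3 := fun x y => c3 x y.
Definition c4 x y := nth 0 (nth [::] [:: [:: 0;0;1;2]; [:: 1;0;3;0]; [:: 0;4;0;1]; [:: 5;1;0;0]] x) y.
Definition C4 : arc_coloring 4 := fun x y => c4 x y.

Lemma C3_norb : norb C3. Proof. apply: norbn_norb; by vm_compute. Qed.
Lemma C4_norb : norb C4. Proof. apply: norbn_norb; by vm_compute. Qed.

Lemma C3_num : 4 <= num_colors C3.
Proof.
apply: (num_ge (l := [:: 0; 1; 2; 3])) => // c; rewrite !inE => /or4P [] /eqP ->.
- exact: (arc_in C3 (x := Ordinal (isT : 0 < 3)) (y := Ordinal (isT : 1 < 3)) isT).
- exact: (arc_in C3 (x := Ordinal (isT : 2 < 3)) (y := Ordinal (isT : 0 < 3)) isT).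
- exact: (arc_in C3 (x := Ordinal (isT : 0 < 3)) (y := Ordinal (isT : 2 < 3)) isT).
- exact: (arc_in C3 (x := Ordinal (isT : 1 < 3)) (y := Ordinal (isT : 0 < 3)) isT).
Qed.

Lemma C4_num : 6 <= num_colors C4.
Proof.
apply: (num_ge (l := [:: 0; 1; 2; 3; 4; 5])) => // c; rewrite !inE.
case/orP => [/eqP ->|]; first exact: (arc_in C4 (x := Ordinal (isT : 0 < 4)) (y := Ordinal (isT : 1 < 4)) isT).
case/orP => [/eqP ->|]; first exact: (arc_in C4 (x := Ordinal (isT : 0 < 4)) (y := Ordinal (isT : 2 < 4)) isT).
case/orP => [/eqP ->|]; first exact: (arc_in C4 (x := Ordinal (isT : 0 < 4)) (y := Ordinal (isT : 3 < 4)) isT).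
case/orP => [/eqP ->|]; first exact: (arc_in C4 (x := Ordinal (isT : 1 < 4)) (y := Ordinal (isT : 2 < 4)) isT).
case/orP => [/eqP ->|/eqP ->]; first exact: (arc_in C4 (x := Ordinal (isT : 2 < 4)) (y := Ordinal (isT : 1 < 4)) isT).
exact: (arc_in C4 (x := Ordinal (isT : 3 < 4)) (y := Ordinal (isT : 0 < 4)) isT).
Qed.

Definition colorB n : arc_coloring n := fun x y =>
  if (x < n./2) && (n./2 <= y) then (x * n + y).+1 else 0.
Arguments colorB : clear implicits.

Lemma colorB_norb n : norb (colorB n).
Proof.
move=> x y z Hxy Hyz Hzx; rewrite /colorB.
case: ifP => [/andP[A1 A2]|_]; case: ifP => [/andP[B1 B2]|_]; case: ifP => [/andP[D1 D2]|_];
  rewrite ?eqxx ?orbT //; exfalso; lia.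
Qed.

Lemma half_sq n : n./2 * (n - n./2) = n * n %/ 4.
Proof.
have := odd_double_half n; rewrite -addnn.
have : odd n <= 1 by case: (odd n).
set k := n./2; set b := nat_of_bool (odd n).
move=> Hb Hn.
nia.
Qed.

Lemma colorB_count n : 2 <= n -> n * n %/ 4 + 1 <= num_colors (colorB n).
Proof.
move=> Hn; set h := n./2.
have Hh1 : 1 <= h by rewrite /h; have := half_leq Hn.
have Hhn : h < n by rewrite /h; lia.
set l := [seq (x * n + y).+1 | x <- iota 0 h, y <- iota h (n - h)].
have Hmem : forall z, z \in l -> exists x y, [/\ x < h, h <= y, y < n & z = (x * n + y).+1].
  move=> z /allpairsP [[x y] /= [Hx Hy ->]].
  move: Hx Hy; rewrite !mem_iota => Hx Hy; exists x, y; split => //; lia.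
have Hu : uniq (0 :: l).
  rewrite /= allpairs_uniq ?iota_uniq ?andbT //.
    by apply/negP => /Hmem [x [y [_ _ _]]].
  move=> [x1 y1] [x2 y2] /allpairsP [[a b] /= [Ha Hb [-> ->]]] /allpairsP [[c d] /= [Hc Hd [-> ->]]].
  move: Hb Hd; rewrite !mem_iota => Hb Hd /= [E].
  have Hbn : b < n by lia.
  have Hdn : d < n by lia.
  have E1 := congr1 (fun t => t %/ n) E; have E2 := congr1 (fun t => t %% n) E.
  move: E1 E2 => /=; rewrite !divnMDl ?modnMDl ?divn_small ?modn_small //; try lia.
  by rewrite !addn0 => -> ->.
have Hsz : size (0 :: l) = n * n %/ 4 + 1.
  by rewrite /= size_allpairs !size_iota /h half_sq addn1.
rewrite -Hsz; apply: num_ge Hu _ => z.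
rewrite inE => /orP [/eqP ->|/Hmem [x [y [Hx Hy Hyn ->]]]].
- have Hh : h < n by [].
  have := arc_in (colorB n) (x := Ordinal Hh) (y := Ordinal (leq_ltn_trans (leq0n _) Hh)).
  rewrite /colorB /= ltnn /=; apply; rewrite -val_eqE /=; lia.
- have Hxn : x < n by lia.
  have := arc_in (colorB n) (x := Ordinal Hxn) (y := Ordinal Hyn).
  rewrite /colorB /= -/h Hx Hy /=; apply; rewrite -val_eqE /=; lia.
Qed.

Unset Implicit Arguments.

Theorem theorem1 (n : nat) : 3 <= n ->
  is_f_Kn n (if n <= 4 then (n * n) %/ 4 + 3 else (n * n) %/ 4 + 2).
Proof.
move=> Hn; split.
- move=> C Hk; case: (rainbow_dec C) => // H; exfalso.
  have := ub Hn H; move: Hk; rewrite /gbound; case: (n <= 4) => /=; lia.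
- move=> j Hj; rewrite leqNgt; apply/negP => Hlt.
  have [C [HC Hnum]] : exists C : arc_coloring n, norb C /\ j <= num_colors C.
    case: (leqP n 4) => Hn4.
      have : (n == 3) || (n == 4) by lia.
      case/orP => /eqP En; subst n.
      + by exists C3; split; [exact: C3_norb | move: Hlt; have := C3_num; rewrite /=; lia].
      + by exists C4; split; [exact: C4_norb | move: Hlt; have := C4_num; rewrite /=; lia].
    exists (colorB n); split; first exact: colorB_norb.
    have := colorB_count (ltnW Hn); move: Hlt.
    have -> : (n <= 4) = false by lia.
    lia.
  exact: (norb_nr HC) (Hj C Hnum).
Qed.
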